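(* Assume $\mathbf a,\mathbf b\in\Delta^n$ with strictly positive entries, let $\eta>0$, let $X^\eta$ be the unique minimizer of $g_\eta$ over $\mathbb{R}^{n\times n}_+$, and set $\gamma=\|C\|_\infty+2\eta$. Then for all $i,j\in[n]$: $$a_ie^{-\gamma/\tau}\le\sum_{k=1}^nX^\eta_{ik}\le1-e^{-\gamma/\tau}(1-a_i),\qquad b_je^{-\gamma/\tau}\le\sum_{k=1}^nX^\eta_{kj}\le1-e^{-\gamma/\tau}(1-b_j).$$
   Context: Let $n\ge1$, $C\in\mathbb{R}^{n\times n}$ with nonnegative entries and $\|C\|_\infty=\max_{i,j}|C_{ij}|$; $\tau>0$; $\Delta^n=\{\mathbf x\in\mathbb{R}^n_+:\sum_i x_i=1\}$. For $\mathbf x\in\mathbb{R}^n_+$ and $\mathbf y$ with positive entries, $\mathbf{KL}(\mathbf x\|\mathbf y)=\sum_i x_i\log(x_i/y_i)-x_i+y_i$ (with $0\log0=0$). $\|X\|_2$ is the Frobenius norm, $\mathbf 1_n$ the all-ones vector. $g_\eta(X)=\langle C,X\rangle+\eta\|X\|_2^2+\tau\mathbf{KL}(X\mathbf 1_n\|\mathbf a)+\tau\mathbf{KL}(X^\top\mathbf 1_n\|\mathbf b)$ for $X\in\mathbb{R}^{n\times n}_+$. *)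

(* Defs.v *)
From HB Require Import structures.
From mathcomp Require Import all_boot all_order all_algebra.
From mathcomp Require Import all_classical all_reals all_analysis.
Set Implicit Arguments. Unset Strict Implicit. Unset Printing Implicit Defensive.
Import Order.TTheory GRing.Theory Num.Theory.
Local Open Scope ring_scope.

Section Defs.
Variable R : realType.
Variable n : nat.

Definition xlogxy (x y : R) : R := if x == 0 then 0 else x * ln (x / y).

Definition KL (x y : 'I_n -> R) : R :=
  \sum_(i < n) (xlogxy (x i) (y i) - x i + y i).

Definition rowsum (X : 'M[R]_n) : 'I_n -> R := fun i => \sum_(k < n) X i k.
Definition colsum (X : 'M[R]_n) : 'I_n -> R := fun j => \sum_(k < n) X k j.

Definition frob2 (X : 'M[R]_n) : R := \sum_(i < n) \sum_(j < n) X i j ^+ 2.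

Definition mxdot (C X : 'M[R]_n) : R := \sum_(i < n) \sum_(j < n) C i j * X i j.

Definition mxinfnorm (C : 'M[R]_n) : R :=
  \big[Num.max/0]_(i < n) \big[Num.max/0]_(j < n) `|C i j|.

Definition nonneg_mx (X : 'M[R]_n) : Prop := forall i j, 0 <= X i j.

Definition g_obj (C : 'M[R]_n) (tau eta : R) (a b : 'I_n -> R) (X : 'M[R]_n) : R :=
  mxdot C X + eta * frob2 X + tau * KL (rowsum X) a + tau * KL (colsum X) b.

End Defs.

(* Main.v *)
Require Import Defs.
From HB Require Import structures.
From mathcomp Require Import all_boot all_order all_algebra.
From mathcomp Require Import all_classical all_reals all_analysis.
From mathcomp Require Import ring lra.
Import Order.TTheory GRing.Theory Num.Theory.
Local Open Scope ring_scope.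

Section H.
Variable R : realType.

Lemma ln_le_sub1 (x : R) : 0 < x -> ln x <= x - 1.
Proof. move=> x0; have := expR_ge1Dx (ln x); rewrite lnK ?posrE //; lra. Qed.

Lemma ln_ge_1subV (x : R) : 0 < x -> 1 - x^-1 <= ln x.
Proof.
move=> x0; have := ln_le_sub1 (x^-1); rewrite invr_gt0 => /(_ x0); rewrite lnV ?posrE //; lra.
Qed.

Lemma xlogxy_ge (r a : R) : 0 <= r -> 0 < a -> r - a <= xlogxy r a.
Proof.
move=> r0 a0; rewrite /xlogxy; case: eqP => [->|/eqP rn0]; first lra.
have rp : 0 < r by rewrite lt0r rn0.
have := ln_ge_1subV _ (divr_gt0 rp a0); rewrite invf_div => h.
have := ler_wpM2l (ltW rp) h; rewrite mulrBr mulr1 mulrCA divff ?gt_eqF // mulr1.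
by [].
Qed.

Lemma xlogxy_scale (s r a : R) : 0 < s -> 0 <= r -> 0 < a ->
  xlogxy (s * r) a = s * xlogxy r a + s * r * ln s.
Proof.
move=> s0 r0 a0; rewrite /xlogxy mulf_eq0 gt_eqF //=; case: eqP => [->|/eqP rn0].
  by rewrite !mulr0 mul0r addr0.
have rp : 0 < r by rewrite lt0r rn0.
have -> : s * r / a = s * (r / a) by rewrite mulrA.
rewrite lnM ?posrE ?divr_gt0 //; ring.
Qed.

Lemma ln_div (x y : R) : 0 < x -> 0 < y -> ln (x / y) = ln x - ln y.
Proof. by move=> x0 y0; rewrite lnM ?posrE ?invr_gt0 // lnV ?posrE. Qed.

Lemma mul_ln_le (x y : R) : 0 < x -> 0 < y -> y * (ln x - ln y) <= x - y.
Proof.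
move=> x0 y0; have := ln_le_sub1 _ (divr_gt0 x0 y0); rewrite ln_div //.
move=> h; have := ler_wpM2l (ltW y0) h.
by rewrite [y * (x / y - 1)]mulrBr mulr1 mulrCA divff ?gt_eqF // mulr1.
Qed.

Lemma xlogxy_incr (r t a : R) : 0 <= r -> 0 < t -> 0 < a ->
  xlogxy (r + t) a - (r + t) - (xlogxy r a - r) <= t * ln ((r + t) / a).
Proof.
move=> r0 t0 a0; have rt : 0 < r + t by rewrite ltr_wpDl.
rewrite /xlogxy gt_eqF //.
case: eqP => [->|/eqP rn0]; first by rewrite add0r; lra.
have rp : 0 < r by rewrite lt0r rn0.
rewrite !ln_div //; have := mul_ln_le _ _ rt rp.
lra.
Qed.

Lemma xlogxy_decr_scale (t r a : R) : 0 < t < 1 -> 0 <= r -> 0 < a ->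
  xlogxy ((1 - t) * r) a - (1 - t) * r - (xlogxy r a - r) <= - t * xlogxy r a + t ^+ 2 * r.
Proof.
move=> /andP[t0 t1] r0 a0; rewrite xlogxy_scale ?subr_gt0 //.
have h := ln_le_sub1 (1 - t); rewrite subr_gt0 in h; have {}h := h t1.
have : (1 - t) * r * ln (1 - t) <= (1 - t) * r * (-t).
  by apply: ler_wpM2l; [apply: mulr_ge0 => //; lra | lra].
nra.
Qed.

Lemma lim_aff (A B D : R) : (forall t, 0 < t -> t < 1 -> A <= B + t * D) -> A <= B.
Proof.
move=> h; apply/ler_addgt0Pr => e e0.
have D1 : 0 < `|D| + 1 by rewrite ltr_wpDl.
pose t := Num.min (1/2) (e / (`|D| + 1)).
have t0 : 0 < t by rewrite lt_min divr_gt0 // divr_gt0.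
have t1 : t < 1 by rewrite gt_min; apply/orP; left; lra.
have te : t * (`|D| + 1) <= e.
  by rewrite -ler_pdivlMr // ge_min lexx orbT.
have := h t t0 t1; have : t * D <= t * `|D| by rewrite ler_wpM2l ?ler_norm ?ltW.
nra.
Qed.

Lemma sum_change n (i : 'I_n) (G H : 'I_n -> R) : (forall k, k != i -> G k = H k) ->
  \sum_(k < n) G k - \sum_(k < n) H k = G i - H i.
Proof.
move=> h; rewrite (bigD1 i) //= [\sum_(k < n) H k](bigD1 i) //=.
rewrite (eq_bigr H (fun k hk => h k hk)); lra.
Qed.

Lemma dsum_change n (F : 'I_n -> 'I_n -> R -> R) (X : 'M[R]_n) i j t :
  \sum_(k<n) \sum_(l<n) F k l (X k l + (if (k == i) && (l == j) then t else 0))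
  - \sum_(k<n) \sum_(l<n) F k l (X k l) = F i j (X i j + t) - F i j (X i j).
Proof.
rewrite (@sum_change n i) => [|k /negbTE ki]; last first.
  by apply: eq_bigr => l _; rewrite ki /= addr0.
rewrite eqxx /= (@sum_change n j) ?eqxx // => l /negbTE lj; by rewrite lj addr0.
Qed.
End H.

Theorem mainTheorem11 (R : realType) (n : nat) (C : 'M[R]_n) (tau eta : R)
  (a b : 'I_n -> R) (X : 'M[R]_n) :
  (0 < n)%N ->
  (forall i j, 0 <= C i j) ->
  0 < tau ->
  (forall i, 0 < a i) -> \sum_(i < n) a i = 1 ->
  (forall j, 0 < b j) -> \sum_(j < n) b j = 1 ->
  0 < eta ->
  nonneg_mx X ->
  (forall Y : 'M[R]_n, nonneg_mx Y -> g_obj C tau eta a b X <= g_obj C tau eta a b Y) ->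
  let gamma := mxinfnorm C + 2 * eta in
  forall i j : 'I_n,
    a i * expR (- gamma / tau) <= rowsum X i <= 1 - expR (- gamma / tau) * (1 - a i) /\
    b j * expR (- gamma / tau) <= colsum X j <= 1 - expR (- gamma / tau) * (1 - b j).
Proof.
move=> n0 Cge0 tau0 a0 suma b0 sumb eta0 Xge0 Xmin gamma i j.
have r0 k : 0 <= rowsum X k by apply: sumr_ge0 => l _; apply: Xge0.
have c0 k : 0 <= colsum X k by apply: sumr_ge0 => l _; apply: Xge0.
pose m := \sum_(k < n) rowsum X k.
have mc : m = \sum_(k < n) colsum X k by rewrite /m /rowsum /colsum exchange_big.
have m0 : 0 <= m by apply: sumr_ge0.
have Xler k l : X k l <= rowsum X k.
  by rewrite /rowsum (bigD1 l) //= lerDl sumr_ge0 // => q _; apply: Xge0.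
have rlem k : rowsum X k <= m.
  by rewrite /m (bigD1 k) //= lerDl sumr_ge0.
have dot0 : 0 <= mxdot C X.
  by apply: sumr_ge0 => k _; apply: sumr_ge0 => l _; apply: mulr_ge0.
have F0 : 0 <= frob2 X.
  by apply: sumr_ge0 => k _; apply: sumr_ge0 => l _; apply: sqr_ge0.
pose XL := \sum_(k < n) xlogxy (rowsum X k) (a k).
pose YL := \sum_(k < n) xlogxy (colsum X k) (b k).
have KLsc (u w : 'I_n -> R) t : 0 < t < 1 -> (forall k, 0 <= u k) -> (forall k, 0 < w k) ->
    KL (fun k => (1 - t) * u k) w - KL u w <=
    - t * \sum_(k < n) xlogxy (u k) (w k) + t ^+ 2 * \sum_(k < n) u k.
  move=> ht u0 w0; rewrite /KL -sumrB !mulr_sumr -big_split /=.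
  apply: ler_sum => k _; have := @xlogxy_decr_scale _ t (u k) (w k) ht (u0 k) (w0 k); lra.
have XLb : XL + YL <= 0.
  apply: (@lim_aff _ _ _ (2 * m)) => t t0 t1.
  pose Y := \matrix_(k, l) ((1 - t) * X k l).
  have Y0 : nonneg_mx Y by move=> k l; rewrite mxE mulr_ge0 // ?subr_ge0 ?ltW //.
  have rY : rowsum Y = (fun k => (1 - t) * rowsum X k).
    by apply: funext => k; rewrite /rowsum mulr_sumr; apply: eq_bigr => l _; rewrite mxE.
  have cY : colsum Y = (fun k => (1 - t) * colsum X k).
    by apply: funext => k; rewrite /colsum mulr_sumr; apply: eq_bigr => l _; rewrite mxE.
  have dY : mxdot C Y = (1 - t) * mxdot C X.
    rewrite /mxdot mulr_sumr; apply: eq_bigr => k _; rewrite mulr_sumr.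
    by apply: eq_bigr => l _; rewrite mxE mulrCA.
  have fY : frob2 Y = (1 - t) ^+ 2 * frob2 X.
    rewrite /frob2 mulr_sumr; apply: eq_bigr => k _; rewrite mulr_sumr.
    by apply: eq_bigr => l _; rewrite mxE exprMn.
  have ht : 0 < t < 1 by rewrite t0 t1.
  have hr := KLsc (rowsum X) a t ht r0 a0.
  have hc := KLsc (colsum X) b t ht c0 b0.
  have := Xmin Y Y0; rewrite /g_obj rY cY dY fY -/XL -/YL -/m in hr hc *.
  rewrite -mc in hc.
  idtac.
  have h1 : (1 - t) * mxdot C X <= mxdot C X.
    have := mulr_ge0 (ltW t0) dot0; nra.
  have h2 : eta * ((1 - t) ^+ 2 * frob2 X) <= eta * frob2 X.
    apply: ler_wpM2l; first exact: ltW.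
    have : 0 <= (t * (2 - t)) * frob2 X by apply: mulr_ge0 => //; nra.
    nra.
  have hr' := ler_wpM2l (ltW tau0) hr.
  have hc' := ler_wpM2l (ltW tau0) hc.
  move=> hg.
  have : 0 <= tau * (t * (2 * t * m - (XL + YL))).
    have -> : tau * (t * (2 * t * m - (XL + YL))) =
       tau * (- t * XL + t ^+ 2 * m) + tau * (- t * YL + t ^+ 2 * m) by ring.
    lra.
  rewrite pmulr_rge0 // pmulr_rge0 //; lra.
have XLge : m - 1 <= XL.
  rewrite /XL /m -suma -sumrB; apply: ler_sum => k _; exact: xlogxy_ge.
have YLge : m - 1 <= YL.
  rewrite /YL mc -sumb -sumrB; apply: ler_sum => k _; exact: xlogxy_ge.
have m1 : m <= 1 by lra.
have Xle1 k l : X k l <= 1.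
  by apply: le_trans (Xler k l) _; apply: le_trans (rlem k) _.
pose E := expR (- gamma / tau).
have E0 : 0 < E by apply: expR_gt0.
have keyB k l : a k * b l * E <= rowsum X k * colsum X l.
  apply: (@lim_aff _ _ _ (rowsum X k + colsum X l + 1 + a k * b l * E * eta / tau)) => t t0 t1.
  pose Y := \matrix_(p, q) (X p q + (if (p == k) && (q == l) then t else 0)).
  have Y0 : nonneg_mx Y.
    move=> p q; rewrite mxE; case: ifP => _; last by rewrite addr0.
    by apply: addr_ge0 => //; exact: ltW.
  have dY : mxdot C Y - mxdot C X = C k l * (X k l + t) - C k l * X k l.
    rewrite /mxdot; under eq_bigr do under eq_bigr do rewrite mxE.
    exact: (@dsum_change _ n (fun p q x => C p q * x) X k l t).
  have fY : frob2 Y - frob2 X = (X k l + t) ^+ 2 - X k l ^+ 2.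
    rewrite /frob2; under eq_bigr do under eq_bigr do rewrite mxE.
    exact: (@dsum_change _ n (fun p q x => x ^+ 2) X k l t).
  have rY p : rowsum Y p = rowsum X p + (if p == k then t else 0).
    rewrite /rowsum (eq_bigr (fun q => X p q + (if (p == k) && (q == l) then t else 0))) => [|q _]; last by rewrite mxE.
    rewrite big_split /=; congr (_ + _); case: eqP => _ /=.
      by rewrite -big_mkcond big_pred1_eq.
    by rewrite big1.
  have cY q : colsum Y q = colsum X q + (if q == l then t else 0).
    rewrite /colsum (eq_bigr (fun p => X p q + (if (p == k) && (q == l) then t else 0))) => [|p _]; last by rewrite mxE.
    rewrite big_split /=; congr (_ + _); case: (eqVneq q l) => [ql|ql].
      under eq_bigr do rewrite andbT.
      by rewrite -big_mkcond big_pred1_eq.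
    by rewrite big1 // => p _; rewrite andbF.
  have KLr : KL (rowsum Y) a - KL (rowsum X) a =
     (xlogxy (rowsum X k + t) (a k) - (rowsum X k + t) + a k)
     - (xlogxy (rowsum X k) (a k) - rowsum X k + a k).
    rewrite /KL (@sum_change _ n k) => [|p pk] /=; first by rewrite rY eqxx.
    by rewrite rY (negbTE pk) addr0.
  have KLc : KL (colsum Y) b - KL (colsum X) b =
     (xlogxy (colsum X l + t) (b l) - (colsum X l + t) + b l)
     - (xlogxy (colsum X l) (b l) - colsum X l + b l).
    rewrite /KL (@sum_change _ n l) => [|p pl] /=; first by rewrite cY eqxx.
    by rewrite cY (negbTE pl) addr0.
  have hr := @xlogxy_incr _ (rowsum X k) t (a k) (r0 k) t0 (a0 k).
  have hc := @xlogxy_incr _ (colsum X l) t (b l) (c0 l) t0 (b0 l).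
  have hg := Xmin Y Y0; rewrite /g_obj in hg.
  set Lr := ln ((rowsum X k + t) / a k) in hr.
  set Lc := ln ((colsum X l + t) / b l) in hc.
  have hr' := ler_wpM2l (ltW tau0) hr.
  have hc' := ler_wpM2l (ltW tau0) hc.
  have e1 : eta * frob2 Y = eta * frob2 X + eta * ((X k l + t) ^+ 2 - X k l ^+ 2).
    by rewrite -fY; ring.
  have e2 : tau * KL (rowsum Y) a = tau * KL (rowsum X) a + tau * (xlogxy (rowsum X k + t) (a k) - (rowsum X k + t) - (xlogxy (rowsum X k) (a k) - rowsum X k)).
    have -> : KL (rowsum Y) a = KL (rowsum X) a + (KL (rowsum Y) a - KL (rowsum X) a) by ring.
    rewrite KLr; ring.
  have e3 : tau * KL (colsum Y) b = tau * KL (colsum X) b + tau * (xlogxy (colsum X l + t) (b l) - (colsum X l + t) - (xlogxy (colsum X l) (b l) - colsum X l)).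
    have -> : KL (colsum Y) b = KL (colsum X) b + (KL (colsum Y) b - KL (colsum X) b) by ring.
    rewrite KLc; ring.
  have : 0 <= t * (C k l + eta * (2 * X k l + t) + tau * (Lr + Lc)).
    rewrite e1 e2 e3 in hg.
    have -> : t * (C k l + eta * (2 * X k l + t) + tau * (Lr + Lc)) =
      (C k l * (X k l + t) - C k l * X k l) + eta * ((X k l + t) ^+ 2 - X k l ^+ 2)
      + tau * (t * Lr) + tau * (t * Lc) by ring.
    lra.
  rewrite pmulr_rge0 // => hpos.
  have Ckl : C k l <= mxinfnorm C.
    apply: le_trans (ler_norm (C k l)) _.
    rewrite /mxinfnorm; apply: le_trans (le_bigmax _ _ k).
    exact: (le_bigmax _ (fun q => `|C k q|) l).
  have h3 : - (gamma + eta * t) / tau <= Lr + Lc.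
    rewrite ler_pdivrMr //; rewrite /gamma; have := Xle1 k l; nra.
  have rp : 0 < rowsum X k + t by rewrite ltr_wpDl.
  have cp : 0 < colsum X l + t by rewrite ltr_wpDl.
  have h4 : E * (1 - eta * t / tau) <= (rowsum X k + t) / a k * ((colsum X l + t) / b l).
    have -> : (rowsum X k + t) / a k * ((colsum X l + t) / b l) = expR (Lr + Lc).
      by rewrite expRD !lnK // posrE divr_gt0.
    apply: le_trans (_ : expR (- (gamma + eta * t) / tau) <= _); last by rewrite ler_expR.
    have -> : - (gamma + eta * t) / tau = - gamma / tau + - (eta * t / tau) by ring.
    rewrite expRD /E; apply: ler_wpM2l; first exact: ltW.
    have := expR_ge1Dx (- (eta * t / tau)); lra.
  have h5 : a k * b l * E * (1 - eta * t / tau) <= (rowsum X k + t) * (colsum X l + t).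
    have abp : 0 < a k * b l by rewrite mulr_gt0.
    have := ler_wpM2l (ltW abp) h4.
    have -> : a k * b l * ((rowsum X k + t) / a k * ((colsum X l + t) / b l)) =
       (rowsum X k + t) * (colsum X l + t).
      by field; rewrite !gt_eqF.
    by rewrite mulrA.
  have tt : t ^+ 2 <= t by nra.
  have : t * t * (rowsum X k + colsum X l + 1) >= 0.
    by apply: mulr_ge0; [nra | have := r0 k; have := c0 l; lra].
  nra.
have rowlo k : a k * E <= rowsum X k.
  have h : a k * E <= rowsum X k * m.
    rewrite mc mulr_sumr -[a k * E]mulr1 -sumb mulr_sumr; apply: ler_sum => l _.
    by rewrite mulrAC; apply: keyB.
  apply: le_trans h _; have := ler_wpM2l (r0 k) m1; by rewrite mulr1.
have collo l : b l * E <= colsum X l.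
  have h : b l * E <= m * colsum X l.
    rewrite /m mulr_suml -[b l * E]mul1r -suma mulr_suml; apply: ler_sum => k _.
    by rewrite mulrA; apply: keyB.
  apply: le_trans h _; have := ler_wpM2r (c0 l) m1; by rewrite mul1r.
have Sa : 1 - a i = \sum_(k < n | k != i) a k.
  by rewrite -suma (bigD1 i) //=; ring.
have Sb : 1 - b j = \sum_(k < n | k != j) b k.
  by rewrite -sumb (bigD1 j) //=; ring.
have h1 : m = rowsum X i + \sum_(k < n | k != i) rowsum X k by rewrite /m (bigD1 i).
have h2 : m = colsum X j + \sum_(k < n | k != j) colsum X k by rewrite mc (bigD1 j).
have h3 : E * \sum_(k < n | k != i) a k <= \sum_(k < n | k != i) rowsum X k.
  by rewrite mulr_sumr; apply: ler_sum => k _; rewrite mulrC; apply: rowlo.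
have h4 : E * \sum_(k < n | k != j) b k <= \sum_(k < n | k != j) colsum X k.
  by rewrite mulr_sumr; apply: ler_sum => k _; rewrite mulrC; apply: collo.
rewrite -/E Sa Sb; split; apply/andP; split.
- exact: rowlo.
- lra.
- exact: collo.
- lra.
Qed.
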